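(* Consider the multirate closed loop described in the context, with high-rate LTI plant $P_h$, low-rate LTI controller $K_l$, downsampler $\mathcal{S}_d$ and multirate zero-order-hold $\mathcal{H}_u$ (downsampling/upsampling factor $F\in\mathbb{N}$), and the LPTV closed-loop operators $$J_{LPTV}=\left(I+P_h\mathcal{H}_uK_l\mathcal{S}_d\right)^{-1}P_h,\qquad S_{LPTV}=\left(I+\mathcal{H}_uK_l\mathcal{S}_d P_h\right)^{-1},$$ so that $y_h=J_{LPTV}r_h$ and $u_h=S_{LPTV}r_h$. Let $\underline{J}=\mathcal{L}J_{LPTV}\mathcal{L}^{-1}$, $\underline{S}=\mathcal{L}S_{LPTV}\mathcal{L}^{-1}$, $\underline{P}=\mathcal{L}P_h\mathcal{L}^{-1}$ be the time-lifted representations and $\tilde{J}(z)=M(z)\underline{J}(z^F)M^{-1}(z)$, $\tilde{S}(z)=M(z)\underline{S}(z^F)M^{-1}(z)$, $\tilde{P}(z)=M(z)\underline{P}(z^F)M^{-1}(z)$ the frequency-lifted representations. Then $$\underline{P}=\underline{J}\,\underline{S}^{-1},\qquad \tilde{P}=\tilde{J}\,\tilde{S}^{-1}.$$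
   Context: All systems are discrete-time. The plant $P_h$ is a linear time-invariant (LTI) system operating at the high sampling rate with sampling time $h_h$; the controller $K_l$ is an LTI system operating at the low rate with sampling time $h_l=Fh_h$, $F\in\mathbb{N}$. The downsampler $\mathcal{S}_d$ maps a high-rate signal $\nu_h$ to the low-rate signal $\nu_l[l]=\nu_h[lF]$; the multirate zero-order-hold $\mathcal{H}_u$ maps a low-rate signal $\nu_l$ to the high-rate signal $\nu_h[t]=\nu_l[\lfloor t/F\rfloor]$. The closed loop is assumed well posed, so the inverses in $J_{LPTV}$ and $S_{LPTV}$ exist. The resulting operators are linear periodically time-varying (LPTV) with period $F$. The time-lifting operator $\mathcal{L}$ maps a signal $\nu_h[t]\in\mathbb{R}^{n}$ to $\underline{\nu}[l]=\begin{bmatrix}\nu_h^\top[lF] & \nu_h^\top[lF+1] & \cdots & \nu_h^\top[lF+F-1]\end{bmatrix}^\top\in\mathbb{R}^{Fn}$; it is invertible, and for an $F$-periodic LPTV operator $G$, $\mathcal{L}G\mathcal{L}^{-1}$ is LTI. With $z=e^{j\omega}$ and $\phi=e^{j2\pi/F}$, $M(z)$ is the $F\times F$ block matrix whose $(i,k)$ block ($i,k=0,\dots,F-1$) is $(z\phi^{i})^{-k}I$. *)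

(* Defs.v *)
From HB Require Import structures.
From mathcomp Require Import all_boot all_order all_algebra.
From mathcomp Require Import all_classical all_reals all_analysis.
From mathcomp Require Import complex.
Set Implicit Arguments. Unset Strict Implicit. Unset Printing Implicit Defensive.
Import Order.TTheory GRing.Theory Num.Theory.
Import numFieldNormedType.Exports.
Local Open Scope ring_scope.

(** Discrete-time (one-sided, zero initial conditions) real vector signals. *)
Definition signal (R : realType) (n : nat) := nat -> 'cV[R]_n.

Definition sig_add (R : realType) n (u v : signal R n) : signal R n := fun t => u t + v t.

Definition lticonv (R : realType) m n (g : nat -> 'M[R]_(n, m)) (u : signal R m) : signal R n :=
  fun t => \sum_(i < t.+1) g i *m u (t - i)%N.

Definition downs (R : realType) n (F : nat) (v : signal R n) : signal R n := fun l => v (l * F)%N.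

Definition mzoh (R : realType) n (F : nat) (v : signal R n) : signal R n := fun t => v (t %/ F)%N.

Definition loopY (R : realType) nu ny (F : nat)
  (p : nat -> 'M[R]_(ny, nu)) (k : nat -> 'M[R]_(nu, ny)) : signal R ny -> signal R ny :=
  fun y => sig_add y (lticonv p (mzoh F (lticonv k (downs F y)))).

Definition loopU (R : realType) nu ny (F : nat)
  (p : nat -> 'M[R]_(ny, nu)) (k : nat -> 'M[R]_(nu, ny)) : signal R nu -> signal R nu :=
  fun u => sig_add u (mzoh F (lticonv k (downs F (lticonv p u)))).

(** Time lifting L : lifted[l] = [v[lF]; v[lF+1]; ...; v[lF+F-1]] in R^(F n).
    (mxvec stacks the rows of an F x n matrix, row i first, i.e. index i*n+j.) *)
Definition tlift (R : realType) n (F : nat) (v : signal R n) : signal R (F * n) :=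
  fun l => (mxvec (\matrix_(i < F, j < n) v (l * F + i)%N j ord0))^T.

Definition tunlift (R : realType) n (F : nat) (HF : (0 < F)%N) (w : signal R (F * n)) : signal R n :=
  fun t => (row (Ordinal (ltn_pmod t HF)) (vec_mx (w (t %/ F)%N)^T))^T.

Definition liftop (R : realType) m n (F : nat) (HF : (0 < F)%N)
  (G : signal R m -> signal R n) : signal R (F * m) -> signal R (F * n) :=
  fun w => tlift F (G (tunlift HF w)).

(** For causal LTI operators this determines the operator. *)
Definition impulse (R : realType) m (j : 'I_m) : signal R m :=
  fun t => if t == 0%N then delta_mx j ord0 else 0.

Definition impresp (R : realType) m n (G : signal R m -> signal R n) (k : nat) : 'M[R]_(n, m) :=
  \matrix_(i < n, j < m) G (impulse R j) k i ord0.

Definition ztr_abs (R : realType) m n (g : nat -> 'M[R]_(n, m)) (z : R[i]) : Prop :=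
  forall i j, cvgn (series (fun k => (`| (g k i j)%:C%C * z ^- k | : (R[i])^o))).

Definition ztr (R : realType) m n (g : nat -> 'M[R]_(n, m)) (z : R[i]) : 'M[R[i]]_(n, m) :=
  \matrix_(i, j) limn (series (fun k => ((g k i j)%:C%C * z ^- k : (R[i])^o))).

Definition expj (R : realType) (theta : R) : R[i] := (cos theta +i* sin theta)%C.

(** M(z): F x F block matrix with (i,k) block (z phi^i)^{-k} I_n, phi = e^{j 2 pi / F};
    flattened index a = i*n + p (same layout as [tlift]). *)
Definition Mz (R : realType) (F n : nat) (z : R[i]) : 'M[R[i]]_(F * n) :=
  \matrix_(a, b) ((z * expj (2 * pi / F%:R) ^+ (a %/ n)%N) ^- (b %/ n)%N
                  * ((a %% n)%N == (b %% n)%N)%:R).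

Definition freqlift (R : realType) m n (F : nat) (HF : (0 < F)%N)
  (G : signal R m -> signal R n) (z : R[i]) : 'M[R[i]]_(F * n, F * m) :=
  Mz F n z *m ztr (impresp (liftop HF G)) (z ^+ F) *m invmx (Mz F m z).

(* Main.v *)
Require Import Defs.
From HB Require Import structures.
From mathcomp Require Import all_boot all_order all_algebra.
From mathcomp Require Import all_classical all_reals all_analysis.
From mathcomp Require Import complex.
From mathcomp Require Import lra zify.
Import Order.TTheory GRing.Theory Num.Theory.
Import numFieldNormedType.Exports.
Local Open Scope ring_scope.
Local Open Scope classical_set_scope.
Set Implicit Arguments. Unset Strict Implicit. Unset Printing Implicit Defensive.
Section Cplx.
Variable R : realType.
Local Notation C := (R[i]).
Local Open Scope complex_scope.
Local Notation Re := (@complex.Re _).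
Local Notation Im := (@complex.Im _).

Lemma ReB (x y : C) : Re (x - y) = Re x - Re y.
Proof. by case: x => ? ?; case: y => ? ?; reflexivity. Qed.
Lemma ImB (x y : C) : Im (x - y) = Im x - Im y.
Proof. by case: x => ? ?; case: y => ? ?; reflexivity. Qed.
Lemma ReD (x y : C) : Re (x + y) = Re x + Re y.
Proof. by case: x => ? ?; case: y => ? ?; reflexivity. Qed.
Lemma ImD (x y : C) : Im (x + y) = Im x + Im y.
Proof. by case: x => ? ?; case: y => ? ?; reflexivity. Qed.

Lemma normc_ge_Im (z : C) : (`|Im z|)%:C <= `|z|.
Proof.
rewrite normc_def lecR -sqrtr_sqr ler_wsqrtr //.
by rewrite lerDr sqr_ge0.
Qed.

Lemma normC_le (z : C) : `|z| <= (`|Re z| + `|Im z|)%:C.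
Proof.
rewrite normc_def lecR.
rewrite -[X in _ <= X]ger0_norm ?addr_ge0 // -sqrtr_sqr ler_wsqrtr //.
rewrite sqrrD -(real_normK (num_real (Re z))) -(real_normK (num_real (Im z))).
by rewrite -addrA lerD2l lerDr mulrn_wge0 // mulr_ge0.
Qed.

Lemma cvg_Re (u : nat -> C^o) (l : C^o) :
  u @ \oo --> l -> (fun n => Re (u n)) @ \oo --> Re l.
Proof.
move=> /cvgrPdist_lt H; apply/cvgrPdist_lt => e e0.
have := H e%:C; rewrite ltcR => /(_ e0).
apply: filterS => n h; rewrite -ltcR; apply: le_lt_trans h.
by rewrite -ReB normc_ge_Re.
Qed.

Lemma cvg_Im (u : nat -> C^o) (l : C^o) :
  u @ \oo --> l -> (fun n => Im (u n)) @ \oo --> Im l.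
Proof.
move=> /cvgrPdist_lt H; apply/cvgrPdist_lt => e e0.
have := H e%:C; rewrite ltcR => /(_ e0).
apply: filterS => n h; rewrite -ltcR; apply: le_lt_trans h.
by rewrite -ImB normc_ge_Im.
Qed.

Lemma cvg_C (u : nat -> C^o) (x y : R) :
  (fun n => Re (u n)) @ \oo --> x -> (fun n => Im (u n)) @ \oo --> y ->
  u @ \oo --> ((x +i* y) : C^o).
Proof.
move=> /cvgrPdist_lt Hx /cvgrPdist_lt Hy; apply/cvgrPdist_lt => -[a b].
rewrite ltcE /= => /andP[/eqP hb a0]; subst b.
have e2 : 0 < a / 2 by rewrite divr_gt0.
near=> n.
apply: le_lt_trans (normC_le _) _.
rewrite (_ : a +i* 0 = a%:C) // ltcR ReB ImB /=.
have h1 : `|x - Re (u n)| < a / 2 by near: n; exact: Hx.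
have h2 : `|y - Im (u n)| < a / 2 by near: n; exact: Hy.
by rewrite [X in _ < X]splitr; exact: ltrD.
Unshelve. all: by end_near.
Qed.
Lemma Re_sum (f : nat -> C) m n :
  Re (\sum_(m <= k < n) f k) = \sum_(m <= k < n) Re (f k).
Proof. exact: (big_morph _ ReD (erefl _)). Qed.
Lemma Im_sum (f : nat -> C) m n :
  Im (\sum_(m <= k < n) f k) = \sum_(m <= k < n) Im (f k).
Proof. exact: (big_morph _ ImD (erefl _)). Qed.

Lemma normCE (z : C) : `|z| = (Re `|z|)%:C.
Proof. by rewrite normc_def. Qed.

Lemma Re_norm_ge0 (z : C) : 0 <= Re `|z|.
Proof. by rewrite normc_def /= sqrtr_ge0. Qed.

Lemma abs_cvgC (a : nat -> C) :
  cvgn (series (fun k => (`|a k| : C^o))) -> cvgn (series (a : nat -> C^o)).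
Proof.
move=> /cvg_ex[L HL].
have h1 := cvg_Re HL; have h2 := cvg_Im HL.
have cN : cvgn (series (fun k => Re `|a k|)).
  apply/cvg_ex; exists (Re L); move: h1.
  by under eq_fun do rewrite Re_sum.
have cRe : cvgn (series (fun k => Re (a k))).
  apply: normed_cvg; apply: (series_le_cvg _ _ _ cN) => k //.
  - exact: normr_ge0.
  - exact: Re_norm_ge0.
  - by rewrite -lecR -normCE normc_ge_Re.
have cIm : cvgn (series (fun k => Im (a k))).
  apply: normed_cvg; apply: (series_le_cvg _ _ _ cN) => k //.
  - exact: normr_ge0.
  - exact: Re_norm_ge0.
  - by rewrite -lecR -normCE normc_ge_Im.
apply/cvg_ex; exists (limn (series (fun k => Re (a k))) +i* limn (series (fun k => Im (a k)))).
apply: cvg_C.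
- by under eq_fun do rewrite Re_sum.
- by under eq_fun do rewrite Im_sum.
Qed.

Lemma cauchy_idx (f : nat -> nat -> C) N :
  \sum_(0 <= k < N) \sum_(0 <= i < k.+1) f i (k - i)%N =
  \sum_(0 <= i < N) \sum_(0 <= j < N - i) f i j.
Proof.
elim: N => [|N IH]; first by rewrite !big_geq.
rewrite big_nat_recr //= IH.
rewrite [RHS](eq_big_nat _ _ (F2 := fun i => \sum_(0 <= j < N - i) f i j + f i (N - i)%N)); last first.
  move=> i /andP[_ Hi]; have Hi2 : (i <= N)%N by rewrite -ltnS.
  by rewrite subSn // big_nat_recr.
by rewrite big_split /= [X in _ = X + _]big_nat_recr //= subnn [X in _ = _ + X + _]big_geq // addr0.
Qed.

Lemma prod_sums (a b : nat -> C) N :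
  (\sum_(0 <= i < N) a i) * (\sum_(0 <= j < N) b j) =
  \sum_(0 <= i < N) \sum_(0 <= j < N) a i * b j.
Proof. by rewrite big_distrl; apply: eq_bigr => i _; rewrite big_distrr. Qed.

Lemma tail_split (a b : nat -> C) N :
  \sum_(0 <= i < N) \sum_(0 <= j < N) a i * b j =
  \sum_(0 <= i < N) \sum_(0 <= j < N - i) a i * b j +
  \sum_(0 <= i < N) \sum_(N - i <= j < N) a i * b j.
Proof.
rewrite -big_split /=; apply: eq_bigr => i _.
by rewrite -big_cat_nat // leq_subr.
Qed.

Lemma tail_bound (g : nat -> nat -> C) N :
  (forall i j, 0 <= g i j) ->
  \sum_(0 <= i < N %/ 2) \sum_(0 <= j < N %/ 2) g i j <=
  \sum_(0 <= i < N) \sum_(0 <= j < N - i) g i j.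
Proof.
move=> g0; set M := (N %/ 2)%N.
have MN : (M <= N)%N by rewrite /M; lia.
have M2 : (M * 2 <= N)%N by rewrite /M; lia.
rewrite [X in _ <= X](big_cat_nat _ (n := M)) //=.
apply: le_trans (_ : _ <= \sum_(0 <= i < M) \sum_(0 <= j < N - i) g i j) _.
  apply: ler_sum_nat => i /andP[_ iM].
  rewrite [X in _ <= X](big_cat_nat _ (n := M)) //=; last by lia.
  by rewrite lerDl; apply: sumr_ge0 => j _.
by rewrite lerDl; apply: sumr_ge0 => i _; apply: sumr_ge0 => j _.
Qed.

Lemma cvg0_le (u d : nat -> C^o) : d @ \oo --> (0 : C^o) ->
  (forall N, `|u N| <= d N) -> u @ \oo --> (0 : C^o).
Proof.
move=> hd hle; apply/(cvgr0Pnorm_le u) => eps eps0.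
near=> N.
apply: le_trans (hle N) _.
have d0 : 0 <= d N by apply: le_trans (hle N); exact: normr_ge0.
rewrite -(ger0_norm d0).
near: N; exact: (cvgr0_norm_le d hd eps eps0).
Unshelve. all: by end_near.
Qed.

Lemma cauchy_prod (a b : nat -> C) :
  cvgn (series (fun k => (`|a k| : C^o))) -> cvgn (series (fun k => (`|b k| : C^o))) ->
  (fun N => \sum_(0 <= k < N) \sum_(0 <= i < k.+1) a i * b (k - i)%N : C^o) @ \oo -->
   (limn (series (a : nat -> C^o)) * limn (series (b : nat -> C^o)) : C^o).
Proof.
move=> ha hb.
have cA := abs_cvgC ha; have cB := abs_cvgC hb.
pose S N : C := \sum_(0 <= k < N) \sum_(0 <= i < k.+1) a i * b (k - i)%N.
pose err N : C := series a N * series b N - S N.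
pose al := series (fun k => (`|a k| : C^o)).
pose be := series (fun k => (`|b k| : C^o)).
pose d N : C := al N * be N - al (N %/ 2)%N * be (N %/ 2)%N.
have hd : d @ \oo --> (0 : C^o).
  have h1 : (fun N => al N * be N) @ \oo --> (limn al * limn be : C^o).
    exact: (cvgM ha hb).
  have hc := @cvg_divnr 2 isT.
  have h2 : (fun N => al (N %/ 2)%N * be (N %/ 2)%N) @ \oo --> (limn al * limn be : C^o).
    exact: (cvgM (cvg_comp _ _ hc ha) (cvg_comp _ _ hc hb)).
  have := cvgB h1 h2; rewrite subrr => h; exact: h.
have herr : err @ \oo --> (0 : C^o).
  apply: (cvg0_le hd) => N.
  pose g i j : C := `|a i| * `|b j|.
  have eT : err N = \sum_(0 <= i < N) \sum_(N - i <= j < N) a i * b j.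
    rewrite /err /S /series /= (cauchy_idx (fun i j => a i * b j)) prod_sums tail_split.
    by rewrite addrC addKr.
  have e1 : `|err N| <= \sum_(0 <= i < N) \sum_(N - i <= j < N) g i j.
    rewrite eT; apply: le_trans (ler_norm_sum _ _ _) _.
    apply: ler_sum_nat => i _; apply: le_trans (ler_norm_sum _ _ _) _.
    by apply: ler_sum_nat => j _; rewrite normrM.
  have eal : al N * be N = \sum_(0 <= i < N) \sum_(0 <= j < N - i) g i j +
                          \sum_(0 <= i < N) \sum_(N - i <= j < N) g i j.
    by rewrite /al /be /series /= prod_sums tail_split.
  have eam : al (N %/ 2)%N * be (N %/ 2)%N =
             \sum_(0 <= i < N %/ 2) \sum_(0 <= j < N %/ 2) g i j.
    by rewrite /al /be /series /= prod_sums.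
  have tb := tail_bound N (fun i j => mulr_ge0 (normr_ge0 (a i)) (normr_ge0 (b j))).
  have e2 : \sum_(0 <= i < N) \sum_(N - i <= j < N) g i j <= d N.
    rewrite /d eal eam -subr_ge0 addrAC addrK subr_ge0; exact: tb.
  exact: le_trans e1 e2.
have h := cvgB (cvgM cA cB) herr; rewrite subr0 in h.
have eS : (S : nat -> C^o) = (series a \* series b) - err.
  by apply: funext => N; rewrite /err /= opprB addrC subrK.
change ((S : nat -> C^o) @ \oo --> (limn (series (a : nat -> C^o)) * limn (series (b : nat -> C^o)) : C^o)).
rewrite eS; exact: h.
Qed.
End Cplx.
Section Lift.
Variable R : realType.

Lemma vec_mxE' m n (u : 'rV[R]_(m * n)) i j : vec_mx u i j = u 0 (mxvec_index i j).
Proof. by rewrite -[in RHS](vec_mxK u) mxvecE. Qed.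

Lemma tliftE n F (v : signal R n) l (i : 'I_F) (j : 'I_n) :
  tlift F v l (mxvec_index i j) ord0 = v (l * F + i)%N j ord0.
Proof. by rewrite /tlift mxE mxvecE mxE. Qed.

Lemma tunliftE n F (HF : (0 < F)%N) (w : signal R (F * n)) t (j : 'I_n) :
  tunlift HF w t j ord0 = w (t %/ F)%N (mxvec_index (Ordinal (ltn_pmod t HF)) j) ord0.
Proof. by rewrite /tunlift mxE mxE vec_mxE' mxE. Qed.

Lemma cV_ext n (u v : 'cV[R]_n) : (forall j, u j ord0 = v j ord0) -> u = v.
Proof. by move=> h; apply/matrixP => j k; rewrite (ord1 k). Qed.

Lemma tunliftK n F (HF : (0 < F)%N) (v : signal R n) : tunlift HF (tlift F v) = v.
Proof.
apply: funext => t; apply: cV_ext => j.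
by rewrite tunliftE tliftE /= -divn_eq.
Qed.

Lemma tliftK n F (HF : (0 < F)%N) (w : signal R (F * n)) : tlift F (tunlift HF w) = w.
Proof.
apply: funext => l; apply: cV_ext => x.
case/mxvec_indexP: x => i j.
rewrite tliftE tunliftE.
have e1 : ((l * F + i) %/ F = l)%N by rewrite divnMDl // divn_small ?addn0.
have e2 : Ordinal (ltn_pmod (l * F + i) HF) = i.
  by apply: ord_inj => /=; rewrite modnMDl modn_small.
move: (Ordinal _) e2 => o ->. by rewrite e1.
Qed.
End Lift.
Section LTI.
Variable R : realType.

Definition sh m (u : signal R m) : signal R m := fun t => if t is t'.+1 then u t' else 0.
Definition ev m (s : nat) (j : 'I_m) : signal R m :=
  fun t => if t == s then delta_mx j ord0 else 0.

Lemma cV_ext' n (u v : 'cV[R]_n) : (forall j, u j ord0 = v j ord0) -> u = v.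
Proof. by move=> h; apply/matrixP => j k; rewrite (ord1 k). Qed.

Lemma ev_succ m s (j : 'I_m) : ev s.+1 j = sh (ev s j).
Proof. by apply: funext => -[|t]. Qed.

Lemma lti_conv m n (G : signal R m -> signal R n)
  (Hlin : forall c u v, G (fun t => c *: u t + v t) = fun t => c *: G u t + G v t)
  (Hcaus : forall u v k, (forall t, (t <= k)%N -> u t = v t) -> G u k = G v k)
  (Hti : forall u k, G (sh u) k.+1 = G u k) :
  forall v k, G v k = \sum_(i < k.+1) impresp G i *m v (k - i)%N.
Proof.
have G0 : G (fun _ => 0) = fun _ => 0.
  have := Hlin (-1) (fun _ => 0) (fun _ => 0).
  have -> : (fun t : nat => (-1 : R) *: (0 : 'cV[R]_m) + 0) = fun _ => 0.
    by apply: funext => t; rewrite scaler0 addr0.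
  move=> h; apply: funext => t; have := congr1 (fun f => f t) h => /= ->.
  by rewrite scaleN1r addNr.
have Gadd : forall u v, G (fun t => u t + v t) = fun t => G u t + G v t.
  move=> u v; have -> : (fun t => u t + v t) = (fun t => (1 : R) *: u t + v t).
    by apply: funext => t; rewrite scale1r.
  by rewrite Hlin; apply: funext => t; rewrite scale1r.
have Gscale : forall c u, G (fun t => c *: u t) = fun t => c *: G u t.
  move=> c u; have -> : (fun t => c *: u t) = (fun t => c *: u t + (fun _ => 0) t).
    by apply: funext => t; rewrite addr0.
  by rewrite Hlin G0; apply: funext => t; rewrite addr0.
have Gsum : forall (I : Type) (r : seq I) (u : I -> signal R m),
    G (fun t => \sum_(i <- r) u i t) = fun t => \sum_(i <- r) G (u i) t.
  move=> I r u; elim: r => [|i r IH].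
    have -> : (fun t => \sum_(i <- [::]) u i t) = fun _ => 0.
      by apply: funext => t; rewrite big_nil.
    by rewrite G0; apply: funext => t; rewrite big_nil.
  have -> : (fun t => \sum_(i0 <- i :: r) u i0 t) =
            (fun t => u i t + (fun t => \sum_(i0 <- r) u i0 t) t).
    by apply: funext => t; rewrite big_cons.
  by rewrite Gadd IH; apply: funext => t; rewrite big_cons.
have Gev : forall s (j : 'I_m) k, (s <= k)%N -> G (ev s j) k = G (ev 0 j) (k - s)%N.
  elim=> [|s IH] j k hk; first by rewrite subn0.
  case: k hk => [//|k] hk.
  by rewrite ev_succ Hti IH // subSS.
move=> v k.
have dec : forall t, (t <= k)%N ->
    v t = \sum_(s < k.+1) \sum_(j < m) v s j ord0 *: ev s j t.
  move=> t tk.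
  rewrite (bigD1 (Ordinal (tk : (t < k.+1)%N))) //= [X in _ + X]big1 ?addr0; last first.
    move=> s /eqP hs; apply: big1 => j _; rewrite /ev.
    case: eqP => [ht|]; last by rewrite scaler0.
    by exfalso; apply: hs; apply: ord_inj; rewrite /= ht.
  rewrite /ev eqxx.
  apply: cV_ext' => x; rewrite summxE (bigD1 x) //= big1 ?addr0.
    by rewrite !mxE !eqxx mulr1.
  by move=> y hy; rewrite !mxE eq_sym (negbTE hy) mulr0.
rewrite (Hcaus v (fun t => \sum_(s < k.+1) \sum_(j < m) v s j ord0 *: ev s j t) k dec).
rewrite (Gsum _ _ (fun s t => \sum_(j < m) v (nat_of_ord s) j ord0 *: ev s j t)).
rewrite /= -(big_mkord (fun _ => true) (fun i => impresp G i *m v (k - i)%N)).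
rewrite big_nat_rev /= big_mkord.
apply: eq_bigr => s _; have hs : (s <= k)%N by rewrite -ltnS ltn_ord.
have e : (0 + k.+1 - s.+1 = k - s)%N by rewrite add0n subSS.
rewrite e subKn //.
rewrite (Gsum _ _ (fun j t => v s j ord0 *: ev s j t)).
apply: cV_ext' => x; rewrite summxE mxE.
apply: eq_bigr => j _.
rewrite (Gscale (v s j ord0) (ev s j)) mxE Gev // mxE mulrC.
by [].
Qed.
End LTI.
Section Plant.
Variable R : realType.

Lemma tunlift_lin n F (HF : (0 < F)%N) (c : R) (u v : signal R (F * n)) :
  tunlift HF (fun t => c *: u t + v t) = fun t => c *: tunlift HF u t + tunlift HF v t.
Proof. by apply: funext => t; apply: cV_ext => j; rewrite !(tunliftE, mxE). Qed.

Lemma tlift_lin n F (c : R) (u v : signal R n) :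
  tlift F (fun t => c *: u t + v t) = fun t => c *: tlift F u t + tlift F v t.
Proof.
apply: funext => l; apply: cV_ext => x; case/mxvec_indexP: x => i j.
by rewrite !(tliftE, mxE).
Qed.

Lemma lticonv_lin m n (p : nat -> 'M[R]_(n, m)) (c : R) (u v : signal R m) :
  lticonv p (fun t => c *: u t + v t) = fun t => c *: lticonv p u t + lticonv p v t.
Proof.
apply: funext => t; rewrite /lticonv scaler_sumr -big_split /=.
by apply: eq_bigr => i _; rewrite mulmxDr scalemxAr.
Qed.

Lemma lticonv_add m n (p : nat -> 'M[R]_(n, m)) (u v : signal R m) :
  lticonv p (sig_add u v) = sig_add (lticonv p u) (lticonv p v).
Proof.
apply: funext => t; rewrite /lticonv /sig_add -big_split /=.
by apply: eq_bigr => i _; rewrite mulmxDr.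
Qed.

Lemma lticonv_caus m n (p : nat -> 'M[R]_(n, m)) (u v : signal R m) k :
  (forall t, (t <= k)%N -> u t = v t) -> lticonv p u k = lticonv p v k.
Proof.
move=> h; rewrite /lticonv; apply: eq_bigr => i _.
by rewrite h // leq_subr.
Qed.

Lemma lticonv_shift m n (p : nat -> 'M[R]_(n, m)) (x x' : signal R m) F :
  (forall s, (s < F)%N -> x' s = 0) -> (forall s, x' (s + F)%N = x s) ->
  forall t, lticonv p x' (t + F)%N = lticonv p x t.
Proof.
move=> h0 h1 t.
rewrite /lticonv -(big_mkord (fun _ => true) (fun i => p i *m x' (t + F - i)%N)).
rewrite -(big_mkord (fun _ => true) (fun i => p i *m x (t - i)%N)).
rewrite (big_cat_nat _ (n := t.+1)) //=; last by lia.
have -> : \sum_(t.+1 <= i < (t + F).+1) p i *m x' (t + F - i)%N = 0.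
  rewrite big_nat_cond; apply: big1 => i /andP[/andP[hi1 hi2] _].
  by rewrite h0 ?mulmx0 //; lia.
rewrite addr0; apply: eq_big_nat => i /andP[_ hi].
by rewrite (_ : (t + F - i = (t - i) + F)%N) ?h1 //; lia.
Qed.

Definition Pl m n F (HF : (0 < F)%N) (p : nat -> 'M[R]_(n, m)) := liftop HF (lticonv p).

Lemma liftP_lin m n F (HF : (0 < F)%N) (p : nat -> 'M[R]_(n, m)) c u v :
  Pl HF p (fun t => c *: u t + v t) = fun t => c *: Pl HF p u t + Pl HF p v t.
Proof. by rewrite /Pl /liftop tunlift_lin lticonv_lin tlift_lin. Qed.

Lemma liftP_caus m n F (HF : (0 < F)%N) (p : nat -> 'M[R]_(n, m)) u v k :
  (forall t, (t <= k)%N -> u t = v t) -> Pl HF p u k = Pl HF p v k.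
Proof.
move=> h; rewrite /Pl /liftop; apply: cV_ext => x; case/mxvec_indexP: x => i j.
rewrite !tliftE.
have HH : lticonv p (tunlift HF u) (k * F + i)%N = lticonv p (tunlift HF v) (k * F + i)%N.
  apply: lticonv_caus => t ht.
  have hi := ltn_ord i.
  rewrite /tunlift h //.
  have : (t < k.+1 * F)%N by rewrite mulSn; lia.
  by rewrite -ltn_divLR.
by rewrite HH.
Qed.

Lemma liftP_ti m n F (HF : (0 < F)%N) (p : nat -> 'M[R]_(n, m)) u k :
  Pl HF p (sh u) k.+1 = Pl HF p u k.
Proof.
rewrite /Pl /liftop; apply: cV_ext => x; case/mxvec_indexP: x => i j.
rewrite !tliftE.
rewrite (_ : (k.+1 * F + i = (k * F + i) + F)%N); last by rewrite mulSn; lia.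
rewrite (@lticonv_shift _ _ p (tunlift HF u) (tunlift HF (sh u)) F) //.
- move=> s hs; apply: cV_ext => j'.
  rewrite tunliftE divn_small // /sh /=. by rewrite !mxE.
- move=> s; apply: cV_ext => j'.
  rewrite !tunliftE.
  have e : ((s + F) %/ F = (s %/ F).+1)%N.
    by rewrite -{1}[F]mul1n divnDMl // addn1.
  have e2 : Ordinal (ltn_pmod (s + F) HF) = Ordinal (ltn_pmod s HF).
    by apply: ord_inj; rewrite /= modnDr.
  by rewrite e2 e.
Qed.

Lemma liftP_conv m n F (HF : (0 < F)%N) (p : nat -> 'M[R]_(n, m)) v k :
  Pl HF p v k = \sum_(i < k.+1) impresp (Pl HF p) i *m v (k - i)%N.
Proof.
apply: lti_conv.
- exact: liftP_lin.
- exact: liftP_caus.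
- exact: liftP_ti.
Qed.
End Plant.
Section Ztr.
Variable R : realType.
Local Notation C := (R[i]).
Local Open Scope complex_scope.

Lemma cvg_bigsum (I : Type) (r : seq I) (f : I -> nat -> C^o) (L : I -> C^o) :
  (forall i, f i @ \oo --> L i) ->
  (fun N => \sum_(i <- r) f i N) @ \oo --> \sum_(i <- r) L i.
Proof.
move=> h; elim: r => [|i r IH].
  rewrite big_nil; under eq_fun do rewrite big_nil; exact: cvg_cst.
rewrite big_cons; under eq_fun do rewrite big_cons.
exact: (cvgD (h i) IH).
Qed.

Lemma ztr_conv n1 n2 n3 (A : nat -> 'M[R]_(n1, n2)) (B : nat -> 'M[R]_(n2, n3)) (w : C) :
  ztr_abs A w -> ztr_abs B w ->
  ztr (fun k => \sum_(i < k.+1) A i *m B (k - i)%N) w = ztr A w *m ztr B w.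
Proof.
move=> hA hB; apply/matrixP => x y; rewrite !mxE.
pose a (l : 'I_n2) k : C := (A k x l)%:C * w ^- k.
pose b (l : 'I_n2) k : C := (B k l y)%:C * w ^- k.
have hc : forall l, (fun N => \sum_(0 <= k < N) \sum_(0 <= i < k.+1) a l i * b l (k - i)%N : C^o)
    @ \oo --> (limn (series (a l : nat -> C^o)) * limn (series (b l : nat -> C^o)) : C^o).
  move=> l; exact: (cauchy_prod (hA x l) (hB l y)).
have hs := cvg_bigsum (r := index_enum 'I_n2) hc.
have eS : series (fun k => (((\sum_(i < k.+1) A i *m B (k - i)%N) x y)%:C * w ^- k : C^o)) =
    (fun N => \sum_(l <- index_enum 'I_n2)
        \sum_(0 <= k < N) \sum_(0 <= i < k.+1) a l i * b l (k - i)%N).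
  apply: funext => N; rewrite /series /= exchange_big /=.
  apply: eq_bigr => k _.
  rewrite summxE rmorph_sum /= mulr_suml.
  rewrite -(big_mkord (fun _ => true) (fun i => ((A i *m B (k - i)%N) x y)%:C * w ^- k)).
  rewrite exchange_big /=; apply: eq_big_nat => i /andP[_ hi].
  rewrite mxE rmorph_sum /= mulr_suml; apply: eq_bigr => l _.
  rewrite /a /b rmorphM /=.
  rewrite (_ : w ^- k = w ^- i * w ^- (k - i)%N); last first.
    by rewrite -invfM -exprD subnKC // -ltnS.
  by rewrite mulrACA.
rewrite eS.
have -> : \sum_j ztr A w x j * ztr B w j y =
    \sum_(l <- index_enum 'I_n2) limn (series (a l : nat -> C^o)) * limn (series (b l : nat -> C^o)).
  by apply: eq_bigr => l _; rewrite !mxE.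
exact: (cvg_lim (@norm_hausdorff _ _) hs).
Qed.
End Ztr.
Unset Implicit Arguments.
Local Close Scope classical_set_scope.

Theorem theorem1 (R : realType) (F nu ny : nat) (HF : (0 < F)%N)
    (p : nat -> 'M[R]_(ny, nu)) (k : nat -> 'M[R]_(nu, ny))
    (invY : signal R ny -> signal R ny) (invU : signal R nu -> signal R nu)
    (wpY1 : cancel (loopY F p k) invY) (wpY2 : cancel invY (loopY F p k))
    (wpU1 : cancel (loopU F p k) invU) (wpU2 : cancel invU (loopU F p k)) :
  let P : signal R nu -> signal R ny := lticonv p in
  let J : signal R nu -> signal R ny := fun r => invY (P r) in
  let S : signal R nu -> signal R nu := invU in
  (exists Sinv : signal R (F * nu) -> signal R (F * nu),
      [/\ cancel (liftop HF S) Sinv, cancel Sinv (liftop HF S) &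
          forall w, liftop HF P w = liftop HF J (Sinv w)]) /\
  (forall omega : R,
      let z := expj omega in
      ztr_abs (impresp (liftop HF P)) (z ^+ F) ->
      ztr_abs (impresp (liftop HF J)) (z ^+ F) ->
      ztr_abs (impresp (liftop HF S)) (z ^+ F) ->
      freqlift HF S z \in unitmx ->
      freqlift HF P z = freqlift HF J z *m invmx (freqlift HF S z)).
Proof.
move=> P J S.
have PS : forall r, invY (lticonv p r) = lticonv p (invU r).
  move=> r; rewrite -{1}(wpU2 r).
  have -> : lticonv p (loopU F p k (invU r)) = loopY F p k (lticonv p (invU r)).
    by rewrite /loopU lticonv_add.
  by rewrite wpY1.
have eJ : liftop HF J = fun w => Pl HF p (liftop HF S w).
  by apply: funext => w; rewrite /liftop /J /P /Pl /liftop PS tunliftK.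
split.
  exists (liftop HF (loopU F p k)); split.
  - by move=> w; rewrite /liftop /S tunliftK wpU2 tliftK.
  - by move=> w; rewrite /liftop /S tunliftK wpU1 tliftK.
  - by move=> w; rewrite /liftop /J /P tunliftK PS wpU1.
move=> omega z hP hJ hS hU.
have eI : impresp (liftop HF J) =
    fun k0 => \sum_(i < k0.+1) impresp (Pl HF p) i *m impresp (liftop HF S) (k0 - i)%N.
  apply: funext => k0; apply/matrixP => x j.
  rewrite mxE eJ liftP_conv !summxE; apply: eq_bigr => i _.
  rewrite !mxE; apply: eq_bigr => l _; rewrite !mxE.
  by [].
have hM : Mz F nu z \in unitmx.
  by move: hU; rewrite /freqlift !unitmx_mul => /andP[/andP[]].
have hfl : freqlift HF J z = freqlift HF P z *m freqlift HF S z.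
  have hz : ztr (impresp (liftop HF J)) (z ^+ F) =
      ztr (impresp (Pl HF p)) (z ^+ F) *m ztr (impresp (liftop HF S)) (z ^+ F).
    rewrite eI; exact: (ztr_conv hP hS).
  rewrite /freqlift hz.
  by rewrite !mulmxA (mulmxKV hM).
by rewrite hfl mulmxK.
Qed.
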